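(* Let $X$ be a $T_4$ locally compact topological space and let $\kappa$ be an uncountable cardinal. Then the following are equivalent: (i) $C_0(X)$ is $\mathrm{SQ}_{<\kappa}$; (ii) $C_0(X)$ is $\mathrm{ASQ}_{<\kappa}$; (iii) for every family $\mathscr K$ of compact subsets of $X$ with $|\mathscr K|<\kappa$, the union $\bigcup\mathscr K$ is not dense in $X$.
   Context: $C_0(X)$ denotes the Banach space of real-valued continuous functions on $X$ vanishing at infinity, with the supremum norm. For a Banach space $Z$ with unit sphere $S_Z$ and a cardinal $\kappa$: $Z$ is $\mathrm{ASQ}_{<\kappa}$ if for every set $A\subset S_Z$ with $|A|<\kappa$ and every $\varepsilon>0$ there exists $y\in S_Z$ with $\|x\pm y\|\le 1+\varepsilon$ for all $x\in A$; $Z$ is $\mathrm{SQ}_{<\kappa}$ if for every set $A\subset S_Z$ with $|A|<\kappa$ there exists $y\in S_Z$ with $\|x\pm y\|\le 1$ for all $x\in A$. *)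

(* Defs.v *)
From HB Require Import structures.
From mathcomp Require Import all_boot all_order all_algebra.
From mathcomp Require Import all_classical all_reals all_analysis.
Set Implicit Arguments. Unset Strict Implicit. Unset Printing Implicit Defensive.
Import Order.TTheory GRing.Theory Num.Theory.
Import numFieldNormedType.Exports.
Local Open Scope classical_set_scope.
Local Open Scope ring_scope.

Definition card_lt (T U : Type) (A : set T) (B : set U) : Prop :=
  (A #<= B)%card /\ ~ (B #<= A)%card.

Section C0.
Variables (R : realType) (X : topologicalType).

Definition C0 (f : X -> R) : Prop :=
  continuous f /\ forall e : R, 0 < e -> compact [set x | e <= `|f x|].

Definition supnorm (f : X -> R) : R := sup (range (fun x => `|f x|)).

Definition C0_sphere : set (X -> R) := [set f | C0 f /\ supnorm f = 1].

(* ASQ_{<kappa}, the cardinal kappa being represented as the cardinality of [set: K] *)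
Definition C0_ASQ_lt (K : Type) : Prop :=
  forall A : set (X -> R), A `<=` C0_sphere -> card_lt A [set: K] ->
  forall e : R, 0 < e -> exists2 y, C0_sphere y &
    forall x, A x -> supnorm (x \+ y) <= 1 + e /\ supnorm (x \- y) <= 1 + e.

Definition C0_SQ_lt (K : Type) : Prop :=
  forall A : set (X -> R), A `<=` C0_sphere -> card_lt A [set: K] ->
  exists2 y, C0_sphere y &
    forall x, A x -> supnorm (x \+ y) <= 1 /\ supnorm (x \- y) <= 1.

End C0.

(* Main.v *)
Require Import Defs.
From HB Require Import structures.
From mathcomp Require Import all_boot all_order all_algebra.
From mathcomp Require Import all_classical all_reals all_analysis.
From mathcomp Require Import zify ring lra.
Import Order.TTheory GRing.Theory Num.Theory.
Import numFieldNormedType.Exports.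
Local Open Scope classical_set_scope.
Local Open Scope ring_scope.
Lemma nat_pair : exists pi : nat * nat -> nat, injective pi /\ forall n, exists p, pi p = n.
Proof.
have /pcard_eqP/bijPex[f [_ fi fs]] := card_nat2.
exists f; split.
  by move=> x y e; apply: fi => //; rewrite inE.
by move=> n; have [p _ <-] := fs n I; exists p.
Qed.

Lemma infinite_inj T (A : set T) : ~ countable A ->
  exists e : nat -> T, (forall n, A (e n)) /\ injective e.
Proof.
move=> nA.
have /infiniteP : infinite_set A by move=> /finite_set_countable.
case/card_leP => f.
exists (fun n => set_val (f (SigSub (mem_set (I : [set: nat] n))))).
split.
  by move=> n; exact: set_valP.
move=> m n e.
have := val_inj e.
move=> /(@inj _ _ _ f); rewrite !inE => /(_ I I) /(congr1 val) //.
Qed.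


Section zorn_part.
Local Open Scope nat_scope.
Variables (T : Type) (A : set T).

Definition PG (G : set ((T * nat) * T)) : Prop :=
  [/\ (forall a n b, G ((a, n), b) -> A a /\ A b),
      (forall p b b', G (p, b) -> G (p, b') -> b = b'),
      (forall p p' b, G (p, b) -> G (p', b) -> p = p') &
      (forall a n, (exists b, G ((a, n), b)) <-> (exists p, G (p, a)))].

Lemma PG_chain : forall F : set (set ((T * nat) * T)), F `<=` PG ->
  total_on F subset -> PG (\bigcup_(X in F) X).
Proof.
move=> F FP Ftot; split.
- by move=> a n b [G FG Gx]; have [h _ _ _] := FP G FG; exact: h _ _ _ Gx.
- move=> p b b' [G FG Gb] [G' FG' Gb'].
  have [GG'|G'G] := Ftot _ _ FG FG'.
    by have [_ h _ _] := FP G' FG'; apply: h (GG' _ Gb) Gb'.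
  by have [_ h _ _] := FP G FG; apply: h Gb (G'G _ Gb').
- move=> p p' b [G FG Gb] [G' FG' Gb'].
  have [GG'|G'G] := Ftot _ _ FG FG'.
    by have [_ _ h _] := FP G' FG'; apply: h (GG' _ Gb) Gb'.
  by have [_ _ h _] := FP G FG; apply: h Gb (G'G _ Gb').
- move=> a n; split.
    case=> b [G FG Gb]; have [_ _ _ h] := FP G FG.
    by have [p Gp] := (h a n).1 (ex_intro _ b Gb); exists p; exists G.
  case=> p [G FG Gp]; have [_ _ _ h] := FP G FG.
  by have [b Gb] := (h a n).2 (ex_intro _ p Gp); exists b; exists G.
Qed.

Lemma PG_max G : PG G -> (forall G', G `<` G' -> ~ PG G') ->
  countable (A `\` [set b | exists p, G (p, b)]).
Proof.
move=> [G1 G2 G3 G4] Gmax; apply: contrapT => nc.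
have [e [eA einj]] := (@infinite_inj _ _ nc).
have [pi [piinj pisurj]] := nat_pair.
pose G' := G `|` [set x | exists m n, x = ((e m, n), e (pi (m, n)))].
have eB m : ~ (exists p, G (p, e m)) by have [] := eA m.
have eD m n b : ~ G ((e m, n), b).
  by move=> Gb; apply: (eB m); apply/(G4 _ n); exists b.
apply: (Gmax G').
  split; first by move=> x Gx; left.
  move=> /(_ ((e 0%N, 0%N), e (pi (0%N, 0%N)))) h.
  have : G' ((e 0%N, 0%N), e (pi (0%N, 0%N))) by right; exists 0%N, 0%N.
  by move=> /h /eD.
split.
- move=> a n b [/G1 //|[m [k [-> _ ->]]]].
  by split; [have [] := eA m|have [] := eA (pi (m, k))].
- move=> p b b' [Gb|[m [k [-> ->]]]] [Gb'|[m' [k' [e1 ->]]]].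
  + exact: G2 Gb Gb'.
  + by move: Gb; rewrite e1 => /eD.
  + by move/eD: Gb'.
  + by case: e1 => /einj -> ->.
- move=> p p' b [Gb|[m [k [-> ->]]]] [Gb'|[m' [k' [e1 e2]]]].
  + exact: G3 Gb Gb'.
  + by exfalso; apply: (eB (pi (m', k'))); exists p; rewrite -e2.
  + by exfalso; apply: (eB (pi (m, k))); exists p'.
  + by move: e2 => /einj /piinj [-> ->].
- move=> a n; split.
  + case=> b [Gb|[m [k [-> _ _]]]].
      by have [p Gp] := (G4 a n).1 (ex_intro _ b Gb); exists p; left.
    have [[m' k'] pe] := pisurj m.
    by exists (e m', k'); right; exists m', k'; rewrite pe.
  + case=> p [Gp|[m [k [_ ->]]]].
      by have [b Gb] := (G4 a n).2 (ex_intro _ p Gp); exists b; left.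
    by exists (e (pi (pi (m, k), n))); right; exists (pi (m, k)), n.
Qed.

Lemma prod_nat_le : countable A \/
  exists h : T * nat -> T, (forall p, (A `*` setT) p -> A (h p)) /\
    (forall p q, (A `*` setT) p -> (A `*` setT) q -> h p = h q -> p = q).
Proof.
have [G [PGG Gmax]] := Zorn_bigcup PG_chain.
have [G1 G2 G3 G4] := PGG.
have cD := @PG_max G PGG Gmax.
have [cA|ncA] := pselect (countable A); [by left | right].
have [b0 Bb0] : exists b0, exists p, G (p, b0).
  apply: contrapT => nB; apply: ncA; apply: sub_countable cD.
  by apply: subset_card_le => a Aa; split => // Ba; apply: nB; exists a.
have [c cinj] := countable_injP _ cD.
have [pi [piinj pisurj]] := nat_pair.
pose Q (p : T * nat) (b : T) :=
  if pselect (exists q, G (q, p.1)) is left _ then G ((p.1, (2 * p.2)%N), b)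
  else G ((b0, (2 * pi (c p.1, p.2)).+1), b).
have : forall p, exists b, A p.1 -> Q p b.
  move=> [a n]; rewrite /Q /=; case: pselect => [Ba|nBa].
    by have [b Gb] := (G4 a (2 * n)%N).2 Ba; exists b.
  by have [b Gb] := (G4 b0 (2 * pi (c a, n)).+1).2 Bb0; exists b.
case/choice => h hQ; exists h; split.
  move=> [a n] [/= Aa _]; have := hQ (a, n) Aa; rewrite /Q /=.
  by case: pselect => _ /G1 [].
move=> [a n] [a' n'] [/= Aa _] [/= Aa' _] e.
have := hQ (a, n) Aa; have := hQ (a', n') Aa'; rewrite /Q /= -e.
case: pselect => Ba'; case: pselect => Ba.
all: move=> /G3 h1 /h1.
- by case=> -> e2; congr pair; lia.
- by case=> _ e2; exfalso; lia.
- by case=> _ e2; exfalso; lia.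
case=> e2.
have /piinj [ec ->] : pi (c a', n') = pi (c a, n) by lia.
congr pair; symmetry; apply: (cinj _ _ _ _ ec); rewrite inE; split => //.
Qed.
End zorn_part.

Lemma T4_hausdorff (R : realType) (X : topologicalType) :
  accessible_space X -> normal_space X -> hausdorff_space X.
Proof.
move=> T1 N; rewrite open_hausdorff => x y xy.
have cl1 z : closed [set z] := @accessible_closed_set1 X T1 z.
have := (@normal_openP R X).1 N [set x] [set y] (cl1 x) (cl1 y).
case.
  by apply/seteqP; split => z // [-> /= e]; move: xy; rewrite e eqxx.
move=> U [V [oU oV xU yV UV]]; exists (U, V) => /=.
  by split; rewrite inE; [apply: xU | apply: yV].
by split => //; apply/eqP.
Qed.

Lemma compact_open_nbhd (X : topologicalType) (C U : set X) :
  locally_compact [set: X] -> compact C -> open U -> C `<=` U ->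
  exists W, [/\ open W, C `<=` W, W `<=` U & exists D, compact D /\ W `<=` D].
Proof.
move=> lcX cC oU CU.
pose G (W : set X) := [/\ open W, W `<=` U & exists D, compact D /\ W `<=` D].
pose Fl := filter_from G (fun W0 => [set W | G W /\ W0 `<=` W]).
have FF : Filter Fl.
  apply: filter_from_filter.
    exists set0; split => //; first exact: open0.
    by exists set0; split => //; exact: compact0.
  move=> W0 W1 [oW0 W0U [D0 [cD0 WD0]]] [oW1 W1U [D1 [cD1 WD1]]].
  exists (W0 `|` W1).
    split; first exact: openU.
      by move=> z [/W0U|/W1U].
    exists (D0 `|` D1); split; first exact: compactU.
    by move=> z [/WD0 ?|/WD1 ?]; [left|right].
  by move=> W [GW W01]; split; split => // z ?; apply: W01; [left|right].
have /compact_near_coveringP cv := cC.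
have H0 := @cv (set X) Fl (fun (W : set X) (x : X) => W x) FF.
move: H0; case.
  move=> x Cx.
  have [K0 wK [cK0 clK0]] := lcX x I.
  have nK : nbhs x K0 := filterS (fun y (h : setT y -> K0 y) => h I) wK.
  pose O := K0° `&` U.
  have GO : G O.
    split; first exact: openI (@open_interior _ K0) oU.
      by move=> z [].
    by exists K0; split => // z [/interior_subset].
  exists (O, [set W | G W /\ O `<=` W]).
    split => /=.
      apply: open_nbhs_nbhs; split; first exact: openI (@open_interior _ K0) oU.
      by split; [exact: nK | exact: CU].
    by exists O => //.
  by move=> [y W] /= [Oy [_ OW]]; apply: OW.
move=> W0 GW0 /(_ W0 (conj GW0 (@subset_refl _ W0))) CW0.
by case: GW0 => oW0 W0U DW0; exists W0; split.
Qed.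

Lemma urysohn_bump (R : realType) (X : topologicalType) (C U : set X) :
  accessible_space X -> normal_space X -> locally_compact [set: X] ->
  compact C -> open U -> C `<=` U ->
  exists g : X -> R, [/\ continuous g, (forall x, 0 <= g x <= 1),
    (forall x, C x -> g x = 1), (forall x, ~ U x -> g x = 0) &
    (forall e, 0 < e -> compact [set x | e <= `|g x|])].
Proof.
move=> T1 N lcX cC oU CU.
have [W [oW CW WU [D [cD WD]]]] := @compact_open_nbhd X C U lcX cC oU CU.
have clC : closed C := compact_closed (@T4_hausdorff R X T1 N) cC.
have sep : uniform_separator (~` W) C.
  apply: normal_uniform_separator => //; first exact: open_closedC.
  by apply/seteqP; split => z // [nW /CW].
have [g [gc g01 g0 g1]] := (@uniform_separatorP X R _ _).1 sep.
have gW x : ~ W x -> g x = 0 by move=> nW; apply: g0; exists x.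
exists g; split => //.
- move=> x; have : `[0, 1]%classic (g x) by apply: g01; exists x.
  by rewrite /= in_itv /=.
- by move=> x Cx; apply: g1; exists x.
- by move=> x nU; apply: gW => /WU.
- move=> e e0; apply: (subclosed_compact _ cD).
    have cn : continuous (fun x => `|g x|).
      move=> x; apply: continuous_comp; [exact: gc | exact: norm_continuous].
    by have := (continuous_closedP _).1 cn _ (@closed_ge R e).
  move=> x /= ex; apply: WD; apply: contrapT => nW.
  by move: ex; rewrite gW // normr0 leNgt e0.
Qed.

Lemma card_lt_le (T V K : Type) (A : set T) (B : set V) :
  (B #<= A)%card -> card_lt A [set: K] -> card_lt B [set: K].
Proof.
move=> BA [AK nKA]; split; first exact: card_le_trans BA AK.
by move=> KB; apply: nKA; exact: card_le_trans KB BA.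
Qed.

Lemma card_lt_countable (V K : Type) (B : set V) :
  ~ countable [set: K] -> countable B -> card_lt B [set: K].
Proof.
move=> nK cB; split.
  apply: card_le_trans cB _; apply/infiniteP => /finite_set_countable.
  exact: nK.
by move=> KB; apply: nK; exact: card_le_trans KB cB.
Qed.

Lemma card_lt_image (T V K : Type) (A : set T) (S : T * nat -> V) :
  ~ countable [set: K] -> card_lt A [set: K] ->
  card_lt (S @` (A `*` [set: nat])) [set: K].
Proof.
move=> nK AK; have le1 := card_image_le S (A `*` [set: nat]).
have [cA|[h [hA hinj]]] := @prod_nat_le T A.
  apply: card_lt_countable => //; apply: sub_countable le1 _.
  exact: countableX.
apply: card_lt_le AK; apply: card_le_trans le1 _.
have : $|{injfun (A `*` [set: nat]) >-> A}|.
  apply/injfunPex; exists h => //.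
  by move=> p q; rewrite !inE; exact: hinj.
by case=> f; exact: inj_card_le f.
Qed.

Section supnorm_facts.
Variables (R : realType) (X : topologicalType).

Lemma supnorm_ge (f : X -> R) M x : (forall y, `|f y| <= M) ->
  `|f x| <= supnorm f.
Proof.
move=> fM; apply: ub_le_sup; last by exists x.
by exists M => _ [y _ <-]; exact: fM.
Qed.

Lemma supnorm_le (f : X -> R) M (x0 : X) : (forall y, `|f y| <= M) ->
  supnorm f <= M.
Proof. by move=> fM; apply: ge_sup; [exists `|f x0|, x0 | move=> _ [y _ <-]]. Qed.

Lemma sphere_has_sup (f : X -> R) : C0_sphere f ->
  has_sup (range (fun x => `|f x|)).
Proof.
move=> [_ s1]; apply: contrapT => /sup_out; rewrite -/(supnorm f) s1.
by move/eqP; rewrite oner_eq0.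
Qed.

Lemma sphere_bound (f : X -> R) : C0_sphere f -> forall x, `|f x| <= 1.
Proof.
move=> fs x; have [_ ub] := sphere_has_sup f fs.
case: fs => _ <-; apply: ub_le_sup => //; by exists x.
Qed.

Lemma sphere_near (f : X -> R) eps : C0_sphere f -> 0 < eps ->
  exists x, 1 - eps < `|f x|.
Proof.
move=> fs e0; have [_ [x _ <-]] := sup_adherent e0 (sphere_has_sup f fs).
by case: fs => _ s1; rewrite -/(supnorm f) s1 => h; exists x.
Qed.

End supnorm_facts.
Arguments supnorm_ge {R X f M} x.
Arguments supnorm_le {R X f M} x0.
Arguments sphere_bound {R X f}.
Arguments sphere_near {R X f}.
Arguments sphere_has_sup {R X f}.

Lemma bump_sphere (R : realType) (X : topologicalType) (g : X -> R) x0 :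
  continuous g -> (forall x, 0 <= g x <= 1) -> g x0 = 1 ->
  (forall e, 0 < e -> compact [set x | e <= `|g x|]) -> C0_sphere g.
Proof.
move=> gc g01 gx0 gcpt; split; first by split.
have gle x : `|g x| <= 1.
  by have /andP[h1 h2] := g01 x; rewrite ger0_norm.
apply/le_anti/andP; split; first exact: (supnorm_le x0 gle).
by rewrite -[X in X <= _]normr1 -gx0; exact: (supnorm_ge x0 gle).
Qed.

Lemma iii_SQ (R : realType) (X : topologicalType) (K : Type) :
  accessible_space X -> normal_space X -> locally_compact [set: X] ->
  ~ countable [set: K] ->
  (forall F : set (set X), (forall C, F C -> compact C) ->
           card_lt F [set: K] -> ~ dense (\bigcup_(C in F) C)) ->
  C0_SQ_lt R X K.
Proof.
move=> T1 N lcX nK H A Asph AK.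
pose S (p : (X -> R) * nat) := [set x | p.2.+1%:R^-1 <= `|p.1 x|].
pose F := S @` (A `*` [set: nat]).
have cF C : F C -> compact C.
  case=> -[f n] [/= Af _] <-; have [[_ +] _] := Asph f Af; apply.
  by rewrite invr_gt0.
have FK : card_lt F [set: K] by exact: card_lt_image.
have [Op [[x0 [oO Ox0]] OF]] := denseNE (H F cF FK).
have van f x : A f -> Op x -> f x = 0.
  move=> Af Ox; apply: contrapT => fx0.
  have fpos : 0 < `|f x| by rewrite normr_gt0; apply/eqP.
  pose n := Num.truncn (`|f x|^-1).
  have hn : (n.+1%:R)^-1 < `|f x|.
    rewrite invf_plt ?posrE //; exact: truncnS_gt.
  have : (Op `&` \bigcup_(C in F) C) x.
    split => //; exists (S (f, n)); first by exists (f, n).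
    by rewrite /S /=; exact: ltW.
  by rewrite OF.
have sub : [set x0] `<=` Op by move=> x ->.
have [g [gc g01 g1 g0 gcpt]] := @urysohn_bump R X [set x0] Op T1 N lcX
  (compact_set1 (x:=x0)) oO sub.
have gs : C0_sphere g by apply: (@bump_sphere R X g x0 gc g01 (g1 x0 erefl) gcpt).
exists g => // f Af; have fb := sphere_bound (Asph f Af).
have gb x : 0 <= g x <= 1 := g01 x.
split; apply: (supnorm_le x0) => x /=.
- have [Ox|nOx] := pselect (Op x).
    by rewrite van // add0r; have /andP[? ?] := gb x; rewrite ger0_norm.
  by rewrite g0 // addr0.
- have [Ox|nOx] := pselect (Op x).
    by rewrite van // sub0r normrN; have /andP[? ?] := gb x; rewrite ger0_norm.
  by rewrite g0 // subr0.
Qed.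

Lemma ASQ_iii (R : realType) (X : topologicalType) (K : Type) :
  accessible_space X -> normal_space X -> locally_compact [set: X] ->
  C0_ASQ_lt R X K ->
  (forall F : set (set X), (forall C, F C -> compact C) ->
           card_lt F [set: K] -> ~ dense (\bigcup_(C in F) C)).
Proof.
move=> T1 N lcX H F cF FK dF.
have : forall C : set X, exists g : X -> R, F C -> C !=set0 ->
    C0_sphere g /\ (forall x, 0 <= g x <= 1) /\ (forall x, C x -> g x = 1).
  move=> C; have [FC|nFC] := pselect (F C); last first.
    by exists (fun=> 0) => /nFC.
  have [[x0 Cx0]|nC] := pselect (C !=set0); last first.
    by exists (fun=> 0) => _ /nC.
  have [g [gc g01 g1 g0 gcpt]] := @urysohn_bump R X C setT T1 N lcX
    (cF C FC) openT (@subsetT _ C).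
  exists g => _ _; split; last by split.
  exact: (@bump_sphere R X g x0 gc g01 (g1 x0 Cx0) gcpt).
case/choice => gC hgC.
pose F' := [set C | F C /\ C !=set0].
pose A := gC @` F'.
have Asph : A `<=` C0_sphere (R:=R) (X:=X).
  by move=> _ [C [FC nC] <-]; have [] := hgC C FC nC.
have AK : card_lt A [set: K].
  apply: card_lt_le FK; apply: card_le_trans (card_image_le _ _) _.
  by apply: subset_card_le => C [].
have [y ys hy] := H A Asph AK (1/4) ltac:(lra).
have [x0 yx0] := sphere_near (1/4 : R) ys ltac:(lra).
pose Op := ~` [set x | `|y x| <= 3/4].
have oO : open Op.
  apply: closed_openC.
  have cn : continuous (fun x => `|y x|).
    move=> x; apply: continuous_comp; [exact: ys.1.1 | exact: norm_continuous].
  by have := (continuous_closedP _).1 cn _ (@closed_le R (3/4)).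
have Ox0 : Op x0 by rewrite /Op /= => h; move: yx0; lra.
have [x1 [Ox1 [C FC Cx1]]] := dF Op (ex_intro _ x0 Ox0) oO.
have nC : C !=set0 by exists x1.
have [gs [g01 g1]] := hgC C FC nC.
have /hy [h1 h2] : A (gC C) by exists C.
have yb := sphere_bound ys; have gb := sphere_bound gs.
have b1 : forall x, `|(gC C \+ y) x| <= 2.
  by move=> x /=; apply: (le_trans (ler_normD _ _)); have := yb x; have := gb x; lra.
have b2 : forall x, `|(gC C \- y) x| <= 2.
  by move=> x /=; apply: (le_trans (ler_normB _ _)); have := yb x; have := gb x; lra.
have := supnorm_ge x1 b1; have := supnorm_ge x1 b2 => /=.
rewrite g1 //.
have : 3/4 < `|y x1| by move: Ox1; rewrite /Op /= => /negP; rewrite -ltNge.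
case: (lerP 0 (y x1)) => hy0.
  rewrite (ger0_norm (x := y x1)) // (ger0_norm (x := 1 + y x1)); lra.
rewrite (ltr0_norm (x := y x1)) // (ger0_norm (x := 1 - y x1)); lra.
Qed.

Lemma SQ_ASQ (R : realType) (X : topologicalType) (K : Type) :
  C0_SQ_lt R X K -> C0_ASQ_lt R X K.
Proof.
move=> H A As AK e e0; have [y ys hy] := H A As AK; exists y => // x Ax.
by have [h1 h2] := hy x Ax; split; lra.
Qed.

Theorem theorem2p7 (R : realType) (X : topologicalType) (K : Type) :
  accessible_space X -> normal_space X -> locally_compact [set: X] ->
  ~ countable [set: K] ->
  [/\ (C0_SQ_lt R X K <-> C0_ASQ_lt R X K) &
      (C0_ASQ_lt R X K <->
        (forall F : set (set X), (forall C, F C -> compact C) ->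
           card_lt F [set: K] -> ~ dense (\bigcup_(C in F) C)))].
Proof.
move=> T1 N lcX nK; split; split.
- exact: (@SQ_ASQ R X K).
- by move=> H; exact: (@iii_SQ R X K T1 N lcX nK (@ASQ_iii R X K T1 N lcX H)).
- exact: (@ASQ_iii R X K T1 N lcX).
- by move=> H; exact: (@SQ_ASQ R X K (@iii_SQ R X K T1 N lcX nK H)).
Qed.
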